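(* Let $k\neq 0$, $a$, $b$ be real numbers and let $\{S^{(a,b)}_{k,n}\}_{n\ge 0}$ be the generalized $k$-FL sequence. (a) For an even integer $n\ge 2$, if $S^{(a,b)}_{k,n+1}-S^{(a,b)}_{k,n}\neq -bk+2b-a$, then the matrix $A^{(k,a,b)}_n$ is invertible. (b) For an odd integer $n\ge 1$, the matrix $B^{(k,a,b)}_n$ is invertible if and only if $S^{(a,b)}_{k,n+1}+S^{(a,b)}_{k,n}\neq bk+2b+a$.
   Context: For real numbers $k,a,b$, the generalized $k$-FL sequence $\{S^{(a,b)}_{k,n}\}_{n\ge0}$ is defined by $S^{(a,b)}_{k,0}=2b$, $S^{(a,b)}_{k,1}=bk+a$, and $S^{(a,b)}_{k,n}=k\,S^{(a,b)}_{k,n-1}+S^{(a,b)}_{k,n-2}$ for $n\ge2$. For $n\ge1$, $A^{(k,a,b)}_n$ is the $n\times n$ real skew circulant matrix whose $(i,j)$ entry is $S^{(a,b)}_{k,j-i+1}$ if $j\ge i$ and $-S^{(a,b)}_{k,n+j-i+1}$ if $j<i$. $B^{(k,a,b)}_n$ is the $n\times n$ circulant matrix whose $(i,j)$ entry is $S^{(a,b)}_{k,j-i+1}$ if $j\ge i$ and $S^{(a,b)}_{k,n+j-i+1}$ if $j<i$. *)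

(* Defs.v *)
From HB Require Import structures.
From mathcomp Require Import all_boot all_order all_algebra.
From mathcomp Require Import all_reals.
Set Implicit Arguments. Unset Strict Implicit. Unset Printing Implicit Defensive.
Import Order.TTheory GRing.Theory Num.Theory.
Local Open Scope ring_scope.

(* generalized k-FL sequence: S 0 = 2b, S 1 = bk + a, S (n+2) = k S (n+1) + S n *)
Fixpoint FLpair {R : pzRingType} (k a b : R) (n : nat) : R * R :=
  match n with
  | 0%N => (2 * b, b * k + a)
  | n'.+1 => let p := FLpair k a b n' in (p.2, k * p.2 + p.1)
  end.

Definition S_FL {R : pzRingType} (k a b : R) (n : nat) : R := (FLpair k a b n).1.

(* skew circulant matrix A_n (0-based indices; entry (i,j) is S_{j-i+1} if j>=i,
   and -S_{n+j-i+1} if j<i) *)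
Definition A_mx {R : pzRingType} (k a b : R) (n : nat) : 'M[R]_n :=
  \matrix_(i < n, j < n)
    if (i <= j)%N then S_FL k a b (j - i).+1
    else - S_FL k a b (n + j - i).+1.

Definition B_mx {R : pzRingType} (k a b : R) (n : nat) : 'M[R]_n :=
  \matrix_(i < n, j < n)
    if (i <= j)%N then S_FL k a b (j - i).+1
    else S_FL k a b (n + j - i).+1.

(* Main.v *)
Require Import Defs.
From HB Require Import structures.
From mathcomp Require Import all_boot all_order all_algebra.
From mathcomp Require Import all_reals.
From mathcomp Require Import zify ring lra.
Import Order.TTheory GRing.Theory Num.Theory.
Local Open Scope ring_scope.

Lemma S_FL_rec (R : pzRingType) (k a b : R) n :
  S_FL k a b n.+2 = k * S_FL k a b n.+1 + S_FL k a b n.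
Proof. by []. Qed.

Lemma beq_test (i m j : nat) : (0 < j)%N -> (i + m == j.-1) = ((i + m).+1 == j).
Proof. move=> hj; apply/eqP/eqP; lia. Qed.

Lemma sum_indn (R : pzRingType) N (F : 'I_N -> R) t (ht : (t < N)%N) :
  \sum_(l < N) F l * ((l:nat) == t)%:R = F (Ordinal ht).
Proof.
rewrite (bigD1 (Ordinal ht)) //= eqxx mulr1 big1 ?addr0 // => l hl.
have /negbTE -> : (l:nat) != t by []. by rewrite mulr0.
Qed.

Definition Tp {R : comNzRingType} (k a b : R) N : {poly R} :=
  \sum_(m < N) (S_FL k a b m.+1)%:P * 'X^m.

Lemma Tp_id (R : comNzRingType) (k a b : R) N :
  (1 - k%:P * 'X - 'X^2) * Tp k a b N =
  (S_FL k a b 1)%:P + (S_FL k a b 0)%:P * 'X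
  - (S_FL k a b N.+1)%:P * 'X ^+ N - (S_FL k a b N)%:P * 'X ^+ N.+1.
Proof.
elim: N => [|N IH].
  rewrite /Tp big_ord0 mulr0 expr0 expr1 mulr1; ring.
rewrite /Tp big_ord_recr /= mulrDr -/(Tp k a b N) IH.
rewrite S_FL_rec rmorphD rmorphM /= !exprS; ring.
Qed.

Definition Jm {R : pzRingType} (s : R) n : 'M[R]_n.+1 :=
  \matrix_(i, j) (if (0 < j)%N then ((i:nat) == j.-1)%:R else s * ((i:nat) == n)%:R).

Lemma mulmxJ (R : comNzRingType) (s : R) n m (A : 'M[R]_(m, n.+1)) i (j : 'I_n.+1) :
  (A *m Jm s n) i j =
  if (0 < j)%N then A i (inord j.-1) else s * A i ord_max.
Proof.
rewrite mxE; case: ifP => hj.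
  have ht : (j.-1 < n.+1)%N by have := ltn_ord j; lia.
  under eq_bigr => l _ do rewrite mxE hj.
  rewrite sum_indn; congr (A i _); apply: val_inj; by rewrite /= inordK.
under eq_bigr => l _ do rewrite mxE hj mulrCA.
have ht : (n < n.+1)%N by [].
rewrite -mulr_sumr sum_indn; congr (_ * A i _); exact: val_inj.
Qed.

Lemma Jpow (R : comNzRingType) (s : R) n m (i j : 'I_n.+1) : (m <= n.+1)%N ->
  (Jm s n ^+ m) i j = ((i + m == j)%N)%:R + s * ((i + m == j + n.+1)%N)%:R.
Proof.
elim: m i j => [|m IH] i j hm.
  rewrite expr0 mxE addn0.
  have -> : ((i:nat) == j + n.+1)%N = false by apply/eqP; have := ltn_ord i; lia.
  by rewrite mulr0 addr0.
rewrite exprSr -mulmxE mulmxJ; case: ifP => hj.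
  rewrite IH; last lia.
  have hj' : (j.-1 < n.+1)%N by have := ltn_ord j; lia.
  rewrite inordK //.
  have -> : (i + m == j.-1)%N = (i + m.+1 == j)%N by apply/eqP/eqP; lia.
  by have -> : (i + m == j.-1 + n.+1)%N = (i + m.+1 == j + n.+1)%N by apply/eqP/eqP; lia.
rewrite IH; last lia.
have -> : ((i:nat) + m == (@ord_max n) + n.+1 :> nat)%N = false by apply/negbTE/eqP; rewrite /=; have := ltn_ord i; lia.
have -> : ((i:nat) + m.+1 == j)%N = false by apply/negbTE/eqP; lia.
have -> : ((i:nat) + m.+1 == j + n.+1)%N = ((i:nat) + m == (@ord_max n)) by apply/eqP/eqP; rewrite /=; lia.
by rewrite mulr0 addr0 add0r mulrC.
Qed.

Lemma JpowN (R : comNzRingType) (s : R) n : Jm s n ^+ n.+1 = s%:M.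
Proof.
apply/matrixP => i j; rewrite Jpow // !mxE.
have -> : ((i:nat) + n.+1 == j)%N = false by apply/negbTE/eqP; have := ltn_ord j; lia.
rewrite eqn_add2r add0r mulr_natr.
by [].
Qed.

Definition circ {R : pzRingType} (s : R) n (c : nat -> R) : 'M[R]_n.+1 :=
  \matrix_(i, j) if (i <= j)%N then c (j - i)%N else s * c (n.+1 + j - i)%N.

Lemma horner_Tp (R : comNzRingType) (s k a b : R) n :
  horner_mx (Jm s n) (Tp k a b n.+1) = circ s n (fun m => S_FL k a b m.+1).
Proof.
rewrite /Tp rmorph_sum /=; apply/matrixP => i j; rewrite summxE !mxE.
under eq_bigr => m _ do rewrite rmorphM /= horner_mx_C rmorphXn /= horner_mx_X -mulmxE mul_scalar_mx mxE Jpow ?(ltnW (ltn_ord m)) // mulrDr mulrCA.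
rewrite big_split /= -mulr_sumr.
case: ifP => hij.
  have ht : (j - i < n.+1)%N by have := ltn_ord j; lia.
  have E1 : forall m : 'I_n.+1, ((i:nat) + m == j)%N = ((m:nat) == j - i)%N by move=> m; apply/eqP/eqP; lia.
  have E2 : forall m : 'I_n.+1, ((i:nat) + m == j + n.+1)%N = false by move=> m; apply/negbTE/eqP; have := ltn_ord m; lia.
  under eq_bigr => m _ do rewrite E1.
  under [X in _ * X]eq_bigr => m _ do rewrite E2.
  rewrite sum_indn big1 ?mulr0 ?addr0 // => m _; by rewrite mulr0.
have ht : (n.+1 + j - i < n.+1)%N by have := ltn_ord j; lia.
have E1 : forall m : 'I_n.+1, ((i:nat) + m == j)%N = false by move=> m; apply/negbTE/eqP; lia.
have E2 : forall m : 'I_n.+1, ((i:nat) + m == j + n.+1)%N = ((m:nat) == n.+1 + j - i)%N by move=> m; apply/eqP/eqP; have := ltn_ord i; lia.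
under eq_bigr => m _ do rewrite E1.
under [X in _ * X]eq_bigr => m _ do rewrite E2.
rewrite sum_indn big1 ?add0r // => m _; by rewrite mulr0.
Qed.

Lemma kerJ (R : fieldType) (s p q : R) n (v : 'rV[R]_n.+1) :
  s != 0 -> (p != 0) || (q != 0) -> (p != 0 -> s * (-(q/p)) ^+ n.+1 != 1) ->
  v *m (p%:M + q%:M * Jm s n) = 0 -> v = 0.
Proof.
move=> hs hpq hr hv.
pose w t := v 0 (inord t).
have vw : forall j : 'I_n.+1, v 0 j = w j by move=> j; rewrite /w inord_val.
have E : forall j : 'I_n.+1, p * v 0 j + q * (v *m Jm s n) 0 j = 0.
  move=> j; move/matrixP: hv => /(_ 0 j).
  by rewrite -mulmxE mulmxDr mul_mx_scalar mulmxA mul_mx_scalar -scalemxAl !mxE.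
have E1 : forall t, (0 < t < n.+1)%N -> p * w t + q * w t.-1 = 0.
  move=> t /andP [h1 h2]; have := E (inord t); rewrite mulmxJ inordK // h1.
  by [].
have E0 : p * w 0 + q * (s * w n) = 0.
  have := E ord0; rewrite mulmxJ /= vw /=.
  by rewrite /w; congr (_ + _ * (_ * v 0 _) = _); apply: val_inj; rewrite /= inordK.
apply/rowP => j; rewrite mxE vw.
have [p0|p0] := eqVneq p 0.
  move: hpq; rewrite p0 eqxx /= => hq.
  have [hj|hj] := ltnP j n.
    have := E1 j.+1; rewrite p0 mul0r add0r /= => /(_ _)/eqP.
    by rewrite mulf_eq0 (negbTE hq) /= => /(_ _)/eqP; apply; lia.
  have jn : (j:nat) = n by have := ltn_ord j; lia.
  by move/eqP: E0; rewrite p0 mul0r add0r !mulf_eq0 (negbTE hq) (negbTE hs) /= jn => /eqP.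
pose r := - (q / p).
have Er : forall t, (0 < t < n.+1)%N -> w t = r * w t.-1.
  move=> t ht; have := E1 t ht => /eqP; rewrite addr_eq0 => /eqP h.
  by apply: (mulfI p0); rewrite h /r; field.
have Ew : forall t, (t < n.+1)%N -> w t = r ^+ t * w 0.
  elim=> [|t IH] ht; first by rewrite expr0 mul1r.
  by rewrite Er ?IH ?exprS ?mulrA //; lia.
have w00 : w 0 = 0.
  have h : w 0 = r * s * w n.
    move/eqP: E0; rewrite addr_eq0 => /eqP h.
    by apply: (mulfI p0); rewrite h /r; field.
  have h2 : w 0 = (s * r ^+ n.+1) * w 0 by rewrite {1}h Ew // exprS; ring.
  move/eqP: h2; rewrite -subr_eq0 -{1}(mul1r (w 0)) -mulrBl mulf_eq0 => /orP [|/eqP //].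
  by rewrite subr_eq0 eq_sym (negbTE (hr p0)).
by rewrite Ew ?w00 ?mulr0.
Qed.

Lemma CB (R : comNzRingType) (s k a b : R) n :
  horner_mx (Jm s n) (1 - k%:P * 'X - 'X^2) * circ s n (fun m => S_FL k a b m.+1) =
  (S_FL k a b 1 - s * S_FL k a b n.+2)%:M + (S_FL k a b 0 - s * S_FL k a b n.+1)%:M * Jm s n.
Proof.
rewrite -horner_Tp -rmorphM Tp_id.
move: (S_FL k a b 1) (S_FL k a b 0) (S_FL k a b n.+2) (S_FL k a b n.+1) => x1 x0 y1 y0.
rewrite !rmorphB !rmorphD /= !rmorphM /= !horner_mx_C !rmorphXn /= !horner_mx_X.
rewrite JpowN; have -> : Jm s n * s%:M = s%:M * Jm s n by rewrite -!mulmxE scalar_mxC.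
rewrite mulrA -!mulmxE -!scalar_mxM [y1 * s]mulrC [y0 * s]mulrC mulmxBl.
move: (x1%:M) (x0%:M *m Jm s n) ((s * y1)%:M) ((s * y0)%:M *m Jm s n) => A1 A2 A3 A4.
by rewrite -!addrA; congr (_ + _); rewrite addrCA.
Qed.

Lemma unit_of_ker (R : fieldType) n (M : 'M[R]_n) :
  (forall v : 'rV_n, v *m M = 0 -> v = 0) -> M \in unitmx.
Proof.
move=> h; rewrite unitmxE unitfE; apply/det0P => -[v hv /h hv0].
by rewrite hv0 eqxx in hv.
Qed.

Lemma ones_J (R : comNzRingType) n :
  (const_mx 1 : 'rV[R]_n.+1) *m Jm (1 : R) n = const_mx 1.
Proof.
apply/rowP => j; rewrite mulmxJ !mxE; case: ifP => _; by rewrite ?mxE ?mul1r.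
Qed.

Lemma ones_horner (R : comNzRingType) n (p : {poly R}) :
  (const_mx 1 : 'rV[R]_n.+1) *m horner_mx (Jm 1 n) p = p.[1] *: const_mx 1.
Proof.
elim/poly_ind: p => [|p c IH].
  by rewrite rmorph0 mulmx0 horner0 scale0r.
rewrite rmorphD rmorphM /= horner_mx_X horner_mx_C -mulmxE mulmxDr mulmxA IH.
by rewrite -scalemxAl ones_J mul_mx_scalar hornerE hornerMX hornerC mulr1 scalerDl.
Qed.

Lemma S_FL0 (R : pzRingType) (k a b : R) : S_FL k a b 0 = 2 * b. Proof. by []. Qed.
Lemma S_FL1 (R : pzRingType) (k a b : R) : S_FL k a b 1 = b * k + a. Proof. by []. Qed.

Lemma Tp1 (R : fieldType) (k a b : R) n : k != 0 ->
  S_FL k a b n.+1 + S_FL k a b n = S_FL k a b 1 + S_FL k a b 0 ->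
  (Tp k a b n).[1] = 0.
Proof.
move=> hk h.
have := congr1 (fun p => p.[1]) (Tp_id _ k a b n) => /=.
rewrite !hornerE !expr1n !mulr1.
have -> : S_FL k a b 1 + S_FL k a b 0 - S_FL k a b n.+1 - S_FL k a b n = 0.
  have h' : S_FL k a b n.+1 = S_FL k a b 1 + S_FL k a b 0 - S_FL k a b n by rewrite -h; ring.
  by rewrite h'; ring.
have -> : 1 - k - 1 = - k by ring.
by move/eqP; rewrite mulf_eq0 oppr_eq0 (negbTE hk) /= => /eqP.
Qed.

Lemma A_circ (R : comNzRingType) (k a b : R) n :
  A_mx k a b n.+1 = circ (-1) n (fun m => S_FL k a b m.+1).
Proof. by apply/matrixP => i j; rewrite !mxE mulN1r. Qed.

Lemma B_circ (R : comNzRingType) (k a b : R) n :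
  B_mx k a b n.+1 = circ 1 n (fun m => S_FL k a b m.+1).
Proof. by apply/matrixP => i j; rewrite !mxE mul1r. Qed.

Lemma circ_unit (R : fieldType) (s k a b : R) n :
  s != 0 ->
  let p := S_FL k a b 1 - s * S_FL k a b n.+2 in
  let q := S_FL k a b 0 - s * S_FL k a b n.+1 in
  (p != 0) || (q != 0) -> (p != 0 -> s * (-(q/p)) ^+ n.+1 != 1) ->
  circ s n (fun m => S_FL k a b m.+1) \in unitmx.
Proof.
move=> hs p q hpq hr.
have hP : (p%:M + q%:M * Jm s n) \in unitmx.
  by apply: unit_of_ker => v; apply: kerJ.
move: hP; rewrite -CB -mulmxE unitmx_mul => /andP [].
by [].
Qed.

Theorem theorem2p7 (R : realType) (k a b : R) (hk : k != 0) :
  (forall n : nat, (2 <= n)%N -> ~~ odd n ->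
     S_FL k a b n.+1 - S_FL k a b n != - (b * k) + 2 * b - a ->
     A_mx k a b n \in unitmx) /\
  (forall n : nat, odd n ->
     (B_mx k a b n \in unitmx) <->
     (S_FL k a b n.+1 + S_FL k a b n != b * k + 2 * b + a)).
Proof.
split.
  case=> [|n] // _ hev hne.
  rewrite A_circ; apply: circ_unit; first by rewrite oppr_eq0 oner_eq0.
    rewrite S_FL0 S_FL1; rewrite -negb_and; apply/negP => /andP [/eqP h1 /eqP h2].
    by move/eqP: hne; apply; lra.
  move=> _; rewrite mulN1r eq_sym -subr_eq0 opprK.
  have := exprn_even_ge0 (- ((S_FL k a b 0 - -1 * S_FL k a b n.+1) / (S_FL k a b 1 - -1 * S_FL k a b n.+2))) hev.
  move=> h; rewrite gt_eqF //; lra.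
case=> [|n] // hodd; rewrite B_circ; split.
  move=> hu; apply/eqP => h.
  pose u := (const_mx 1 : 'rV[R]_n.+1).
  have hu0 : u *m circ 1 n (fun m => S_FL k a b m.+1) = 0.
    rewrite -horner_Tp ones_horner Tp1 ?scale0r //.
    by rewrite S_FL0 S_FL1 h; ring.
  have : u = 0 by rewrite -(mulmxK hu u) hu0 mul0mx.
  move/rowP => /(_ ord0); rewrite !mxE; apply/eqP; exact: oner_neq0.
move=> hne; apply: circ_unit; first exact: oner_neq0.
  rewrite S_FL0 S_FL1; rewrite -negb_and; apply/negP => /andP [/eqP h1 /eqP h2].
  by move/eqP: hne; apply; lra.
move=> hp; rewrite mul1r; apply/eqP => hr.
set r := - _ in hr.
have r0 : 0 <= r.
  rewrite leNgt; apply/negP => hr0.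
  by have := exprn_odd_lt0 r hodd; rewrite hr0 hr ltr10.
move/eqP: hr; rewrite pexpr_eq1 // => /eqP hr1.
move: hr1; rewrite /r => /eqP; rewrite eqr_oppLR => /eqP hq.
move: (divfK hp (S_FL k a b 0 - 1 * S_FL k a b n.+1)); rewrite hq mulN1r.
rewrite S_FL0 S_FL1 => h; move/eqP: hne; apply; lra.
Qed.
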